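(* Let $G=(V,E)$ be a graph with maximum degree $\Delta$ and let $h\le\log\Delta$ be a nonnegative integer. Assuming the base case of Procedure Edge-Coloring produces a proper $(\Delta'+1)$-edge-coloring of its input (of maximum degree $\Delta'$), Procedure Edge-Coloring$(G,h)$ computes a proper $(\Delta+3\cdot 2^h)$-edge-coloring of $G$.
   Context: Logarithms are base 2. A proper $k$-edge-coloring of $G$ is a map $\varphi:E\to\{1,\dots,k\}$ with $\varphi(e)\ne\varphi(e')$ for distinct edges sharing an endpoint. A degree-splitting of $H$ with discrepancy $\kappa$ is a partition $(E_1,E_2)$ of $E(H)$ with $|\deg_{E_1}(v)-\deg_{E_2}(v)|\le\kappa$ for every vertex $v$. Procedure Edge-Coloring$(H,h)$: if $h=0$, return a proper $(\Delta(H)+1)$-edge-coloring of $H$ with palette $\{1,\dots,\Delta(H)+1\}$ computed by a base-case subroutine. Otherwise compute a degree-splitting $(E_1,E_2)$ of $H$ with discrepancy at most 2 and $\{|E_1|,|E_2|\}=\{\lfloor |E(H)|/2\rfloor,\lceil |E(H)|/2\rceil\}$; let $H_1=(V(H),E_1)$, $H_2=(V(H),E_2)$ (isolated vertices discarded); compute $\varphi_1=$ Edge-Coloring$(H_1,h-1)$, $\varphi_2=$ Edge-Coloring$(H_2,h-1)$; return $\varphi(e)=\varphi_1(e)$ for $e\in E_1$ and $\varphi(e)=p_1+\varphi_2(e)$ for $e\in E_2$, where $p_1$ is the palette size of $\varphi_1$ (the palette of $\varphi$ has size $p_1+p_2$). *)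

(* Defs.v *)
From mathcomp Require Import all_boot.
Set Implicit Arguments. Unset Strict Implicit. Unset Printing Implicit Defensive.

Section Defs.
Variable V : finType.

(* A (simple) graph on vertex type V is given by its edge set: a set of
   2-element subsets of V. Isolated vertices play no role. *)
Definition is_graph (E : {set {set V}}) : Prop := forall e, e \in E -> #|e| = 2.

Definition deg (H : {set {set V}}) (v : V) : nat := #|[set e in H | v \in e]|.

Definition maxdeg (H : {set {set V}}) : nat := \max_(v : V) deg H v.

Definition proper_edge_coloring (H : {set {set V}}) (k : nat)
    (phi : {set V} -> nat) : Prop :=
  (forall e, e \in H -> 1 <= phi e <= k) /\
  (forall e e', e \in H -> e' \in H -> e != e' ->
     (exists v, (v \in e) && (v \in e')) -> phi e != phi e').

Definition balanced_split (H E1 E2 : {set {set V}}) : Prop :=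
  [/\ E1 :|: E2 = H, E1 :&: E2 = set0,
      (forall v, deg E1 v <= deg E2 v + 2 /\ deg E2 v <= deg E1 v + 2) &
      ((#|E1| = #|H|./2 /\ #|E2| = uphalf #|H|) \/
       (#|E1| = uphalf #|H| /\ #|E2| = #|H|./2))].

(* edge_coloring H h phi p : (phi, p) is a possible output (coloring, palette
   size) of Procedure Edge-Coloring(H, h), for any admissible choice of the
   degree-splittings and any base-case output that is a proper
   (Delta(H')+1)-edge-coloring of its input H'. *)
Inductive edge_coloring :
    {set {set V}} -> nat -> ({set V} -> nat) -> nat -> Prop :=
| EC_base H phi :
    proper_edge_coloring H (maxdeg H).+1 phi ->
    edge_coloring H 0 phi (maxdeg H).+1
| EC_step H h E1 E2 phi1 p1 phi2 p2 :
    balanced_split H E1 E2 ->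
    edge_coloring E1 h phi1 p1 ->
    edge_coloring E2 h phi2 p2 ->
    edge_coloring H h.+1
      (fun e => if e \in E1 then phi1 e else p1 + phi2 e) (p1 + p2).

End Defs.

(* Main.v *)
Require Import Defs.
From mathcomp Require Import all_boot.
From mathcomp Require Import zify.

Lemma deg_split (V : finType) (H E1 E2 : {set {set V}}) v :
  E1 :|: E2 = H -> E1 :&: E2 = set0 -> deg H v = deg E1 v + deg E2 v.
Proof.
move=> HU HI; rewrite /deg -HU.
have -> : [set e in E1 :|: E2 | v \in e] =
  [set e in E1 | v \in e] :|: [set e in E2 | v \in e].
  by apply/setP=> e; rewrite !inE andb_orl.
rewrite cardsU.
have -> : [set e in E1 | v \in e] :&: [set e in E2 | v \in e] = set0.
  apply/setP=> e; rewrite !inE.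
  have := congr1 (fun S : {set {set V}} => e \in S) HI; rewrite /= !inE.
  by case: (e \in E1); case: (e \in E2); case: (v \in e).
by rewrite cards0 subn0.
Qed.

Lemma maxdeg_half (V : finType) (H E1 E2 : {set {set V}}) :
  balanced_split H E1 E2 -> (maxdeg E1).*2 <= maxdeg H + 2 /\ (maxdeg E2).*2 <= maxdeg H + 2.
Proof.
case=> HU HI Hd _.
have HdH : forall v, deg H v <= maxdeg H by move=> v; exact: (leq_bigmax v).
split.
- apply: (big_ind (fun x => x.*2 <= maxdeg H + 2)) => //.
  + move=> x y Hx Hy; lia.
  + move=> v _; have := HdH v; rewrite (@deg_split _ _ _ _ v HU HI); have := Hd v. rewrite /maxdeg; lia.
- apply: (big_ind (fun x => x.*2 <= maxdeg H + 2)) => //.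
  + move=> x y Hx Hy; lia.
  + move=> v _; have := HdH v; rewrite (@deg_split _ _ _ _ v HU HI); have := Hd v. rewrite /maxdeg; lia.
Qed.

Lemma ec_inv (V : finType) (H : {set {set V}}) h phi p :
  edge_coloring H h phi p ->
  proper_edge_coloring H p phi /\ p + 2 <= maxdeg H + 3 * 2 ^ h.
Proof.
elim=> {H h phi p}.
- move=> H phi Hp; split => //; rewrite expn0; lia.
- move=> H h E1 E2 phi1 p1 phi2 p2 Hs _ [[R1 P1] B1] _ [[R2 P2] B2].
  have [D1 D2] := @maxdeg_half _ _ _ _ Hs.
  case: Hs => HU HI _ _.
  have inH : forall e, e \in H -> e \notin E1 -> e \in E2.
    by move=> e; rewrite -HU inE => /orP[->|->].
  have in1 : forall e, e \in E1 -> e \in H by move=> e; rewrite -HU inE => ->.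
  split; last by rewrite expnS; lia.
  split.
  + move=> e eH; case: ifP => Ee.
    * by have := R1 e Ee; lia.
    * by have := R2 e (inH e eH (negbT Ee)); lia.
  + move=> e e' eH e'H ne ex.
    case: ifP => Ee; case: ifP => Ee'.
    * exact: P1.
    * have := R1 e Ee; have := R2 e' (inH e' e'H (negbT Ee')).
      move=> a b; apply/eqP; lia.
    * have := R1 e' Ee'; have := R2 e (inH e eH (negbT Ee)).
      move=> a b; apply/eqP; lia.
    * have := P2 e e' (inH e eH (negbT Ee)) (inH e' e'H (negbT Ee')) ne ex.
      by rewrite eqn_add2l.
Qed.

Theorem lemma3p5 (V : finType) (E : {set {set V}}) (h : nat) :
  is_graph E -> 2 ^ h <= maxdeg E ->
  forall (phi : {set V} -> nat) (p : nat),
    edge_coloring E h phi p ->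
    proper_edge_coloring E (maxdeg E + 3 * 2 ^ h) phi.
Proof.
move=> _ _ phi p /ec_inv [[R P] B]; split => // e eE.
by have := R e eE; lia.
Qed.
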